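(* Let $n\ge1$ and let $(A_1,A_2,A_3,A_4)$ be distinct nonempty subsets of $[n]$ with $\chi_{A_1}+\chi_{A_3}=\chi_{A_2}+\chi_{A_4}$ and $A_i\cap A_j\ne\emptyset$ for $1\le i<j\le 3$, where $A_4$ is the largest of the four in the binary order. Define $M=\bigcap_{i=1}^4A_i$ and $S_i=(A_i\cap A_{i+1})\setminus M$ for $1\le i\le 4$ (indices mod 4). Then $(S_1,S_2,S_3,S_4,M)$ is a side-midpoint tuple, i.e.: (S1) $S_i\cap S_j=\emptyset$ for all $i\ne j$; (S2) $M\cap S_i=\emptyset$ for all $i$; (S3) $M\ne\emptyset$; (S4) of each pair of opposite sides $\{S_1,S_3\}$, $\{S_2,S_4\}$, at most one is empty.
   Context: $\chi_A\in\{0,1\}^n$ denotes the characteristic vector of $A\subseteq[n]$. Binary order: a subset $I\subseteq[n]$ is encoded by $\sum_{j\in I}2^j$ and subsets are linearly ordered by this number. Indices of $A_i$ and $S_i$ are taken cyclically mod 4 ($A_5=A_1$, $S_0=S_4$). A side-midpoint tuple in $[n]$ is a tuple $(S_1,S_2,S_3,S_4,M)$ of subsets of $[n]$ satisfying (S1)–(S4). *)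

(* Defs.v *)
From mathcomp Require Import all_boot.
Set Implicit Arguments. Unset Strict Implicit. Unset Printing Implicit Defensive.

(* [n] is modelled as 'I_n = {0,...,n-1} (shift of {1,...,n}); subsets are {set 'I_n}. *)

Definition chi n (A : {set 'I_n}) (x : 'I_n) : nat := (x \in A).

Definition bincode n (A : {set 'I_n}) : nat := \sum_(j in A) 2 ^ j.

Definition bin_lt n (A B : {set 'I_n}) : bool := bincode A < bincode B.

Definition side_midpoint_tuple n (S1 S2 S3 S4 M : {set 'I_n}) : Prop :=
  let S := [:: S1; S2; S3; S4] in
  (forall i j : 'I_4, i != j -> nth set0 S i :&: nth set0 S j = set0) /\
  (forall i : 'I_4, M :&: nth set0 S i = set0) /\
  M != set0 /\
  ~ (S1 = set0 /\ S3 = set0) /\ ~ (S2 = set0 /\ S4 = set0).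

(* Main.v *)
Require Import Defs.
From mathcomp Require Import all_boot.

Ltac crush H x A1 A2 A3 A4 :=
  move: (H x); rewrite /chi;
  case: (x \in A1); case: (x \in A2); case: (x \in A3); case: (x \in A4).

Theorem proposition7p6 (n : nat) (A1 A2 A3 A4 : {set 'I_n}) :
  1 <= n ->
  uniq [:: A1; A2; A3; A4] ->
  A1 != set0 -> A2 != set0 -> A3 != set0 -> A4 != set0 ->
  (forall x : 'I_n, chi A1 x + chi A3 x = chi A2 x + chi A4 x) ->
  A1 :&: A2 != set0 -> A1 :&: A3 != set0 -> A2 :&: A3 != set0 ->
  bin_lt A1 A4 -> bin_lt A2 A4 -> bin_lt A3 A4 ->
  let M := A1 :&: A2 :&: A3 :&: A4 in
  side_midpoint_tuple ((A1 :&: A2) :\: M) ((A2 :&: A3) :\: M)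
                      ((A3 :&: A4) :\: M) ((A4 :&: A1) :\: M) M.
Proof.
move=> _ Hu _ _ _ _ H _ H13 _ _ _ _ M.
move: Hu; rewrite /= !inE !negb_or => /and4P [/and3P [h12 h13 h14] /andP [h23 h24] h34 _].
rewrite /side_midpoint_tuple /M; split; [|split; [|split; [|split]]].
- case=> [[|[|[|[|i]]]] Hi] //; case=> [[|[|[|[|j]]]] Hj] // _ /=;
  apply/setP => x; rewrite !inE; crush H x A1 A2 A3 A4 => //.
- case=> [[|[|[|[|i]]]] Hi] //= ;
  apply/setP => x; rewrite !inE; crush H x A1 A2 A3 A4 => //.
- case/set0Pn: H13 => x; rewrite !inE => hx; apply/set0Pn; exists x.
  move: hx; rewrite !inE; crush H x A1 A2 A3 A4 => //.
- move=> [/setP e1 /setP e3]; move/eqP: h23; apply; apply/setP => x.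
  move: (e1 x) (e3 x); rewrite !inE; crush H x A1 A2 A3 A4 => //.
- move=> [/setP e1 /setP e3]; move/eqP: h12; apply; apply/setP => x.
  move: (e1 x) (e3 x); rewrite !inE; crush H x A1 A2 A3 A4 => //.
Qed.
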